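(* Fix a set $A$, a set $V(A)$ of ''objects'', a binary relation $\trianglelefteq$ on objects, and a binary relation $\sqsubset$ on objects (with reflexive closure $\sqsubseteq$) satisfying: (i) if $x \trianglelefteq y$ and $y \sqsubset z$ then $x \trianglelefteq z$; (ii) $\sqsubset$ is well-founded on $V(A)$, i.e., there is no sequence $f$ with $f(i)\in V(A)$ and $f(i+1)\sqsubset f(i)$ for all $i$; (iii) $\sqsubset$ is transitive; (iv) if $x \sqsubset y$ and $y \in V(A)$ then $x \in V(A)$. Let $f:\mathbb{N}\to$ objects with $f(0)\in V(A)$ and $f$ bad w.r.t. $\trianglelefteq$. Then there exists a sequence $g$ such that for every $i$ there is $j$ with $g(i)\sqsubseteq f(j)$, $g$ is minimal at $0$, and $g$ is bad w.r.t. $\trianglelefteq$.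
   Context: Sequences are functions $\mathbb{N}\to$ objects. A sequence $h$ is good w.r.t. $\trianglelefteq$ if there are $i<j$ with $h(i)\trianglelefteq h(j)$, and bad otherwise. A sequence $f$ is minimal at $n$ if for every sequence $g$ such that $g(i)=f(i)$ for all $i<n$, $g(n)\sqsubset f(n)$, and for every $i\ge n$ there exists $j\ge n$ with $g(i)\sqsubseteq f(j)$, the sequence $g$ is good w.r.t. $\trianglelefteq$. *)

(* Defs.v *)
From Stdlib Require Import Arith.

Definition rclos {T : Type} (sq : T -> T -> Prop) (x y : T) : Prop :=
  sq x y \/ x = y.

Definition good {T : Type} (le : T -> T -> Prop) (h : nat -> T) : Prop :=
  exists i j, i < j /\ le (h i) (h j).

Definition bad {T : Type} (le : T -> T -> Prop) (h : nat -> T) : Prop :=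
  ~ good le h.

Definition minimal_at {T : Type} (le sq : T -> T -> Prop)
    (f : nat -> T) (n : nat) : Prop :=
  forall g : nat -> T,
    (forall i, i < n -> g i = f i) ->
    sq (g n) (f n) ->
    (forall i, n <= i -> exists j, n <= j /\ rclos sq (g i) (f j)) ->
    good le g.

(* Main.v *)
Require Import Defs.
From Stdlib Require Import Arith Classical ClassicalEpsilon.

Theorem lemma5 (T : Type) (V : T -> Prop) (le sq : T -> T -> Prop)
  (H1 : forall x y z, le x y -> sq y z -> le x z)
  (H2 : ~ exists f : nat -> T, forall i, V (f i) /\ sq (f (S i)) (f i))
  (H3 : forall x y z, sq x y -> sq y z -> sq x z)
  (H4 : forall x y, sq x y -> V y -> V x)
  (f : nat -> T) (Hf0 : V (f 0)) (Hbad : bad le f) :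
  exists g : nat -> T,
    (forall i, exists j, rclos sq (g i) (f j)) /\
    minimal_at le sq g 0 /\
    bad le g.
Proof.
  set (P := fun x => V x /\ exists h : nat -> T, h 0 = x /\ bad le h /\
             forall i, exists j, rclos sq (h i) (f j)).
  assert (Hmin : exists x, P x /\ forall y, P y -> ~ sq y x).
  { apply NNPP; intro Hn.
    assert (Hstep : forall x, P x -> exists y, P y /\ sq y x).
    { intros x Px. apply NNPP; intro Hy. apply Hn. exists x. split; auto.
      intros y Py Hs. apply Hy. eauto. }
    set (step := fun s : {x | P x} =>
      let (y, Hy) := constructive_indefinite_description _ (Hstep _ (proj2_sig s)) in
      exist P y (proj1 Hy)).
    assert (Pf : P (f 0)).
    { split; auto. exists f. split; auto. split; auto. intro i; exists i; right; auto. }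
    set (sq_ := fun n => proj1_sig (Nat.iter n step (exist P (f 0) Pf))).
    apply H2. exists sq_. intro i. split.
    - unfold sq_. destruct (Nat.iter i step _) as [x Px]. exact (proj1 Px).
    - unfold sq_. simpl. destruct (Nat.iter i step _) as [x Px]. unfold step.
      destruct (constructive_indefinite_description _ _) as [y Hy]. simpl. tauto. }
  destruct Hmin as [x [[Vx [g [Hg0 [Hgbad Hgf]]]] Hxmin]].
  exists g. split; [exact Hgf|]. split; [|exact Hgbad].
  intros g' _ Hs Hcov. apply NNPP; intro Hb.
  apply (Hxmin (g' 0)); [|rewrite <- Hg0; exact Hs].
  split.
  - apply (H4 _ (g 0)); auto. rewrite Hg0; auto.
  - exists g'. split; auto. split; auto. intro i.
    destruct (Hcov i (Nat.le_0_l i)) as [j [_ Hj]].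
    destruct (Hgf j) as [k Hk]. exists k.
    destruct Hj as [Hj|Hj]; destruct Hk as [Hk|Hk].
    + left; eapply H3; eauto.
    + left; congruence.
    + left; congruence.
    + right; congruence.
Qed.
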